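(* For all integers $n\ge 2$ and $m\ge 1$, the number of tableaux $T\in\bigsqcup_{b\ge1,k\ge0,\,2b+k=n}\mathrm{SYT}^{+k}((b,b))$ whose top row contains exactly $m$ entries (counted over all cells of the top row) equals the Narayana number $$\frac{1}{m}\binom{n-1}{m-1}\binom{n-2}{m-1}.$$
   Context: $\mathrm{SYT}^{+k}(\lambda)$: for a partition $\lambda$ of $N$ and $k\ge 0$, the set of fillings $S$ of the cells of the Ferrers diagram of $\lambda$ by nonempty sets of positive integers forming a set partition of $[N+k]$, such that $\max S(u)<\min S(v)$ whenever $u\ne v$ and $u$ is weakly northwest of $v$. The shape $(b,b)$ is the $2\times b$ rectangle. *)

(* Defs.v *)
From mathcomp Require Import all_boot.
Set Implicit Arguments. Unset Strict Implicit. Unset Printing Implicit Defensive.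

(* Cells of the Ferrers diagram of the 2 x b rectangle (b,b), English
   convention: cell (r, c) with row r in {0 (top), 1 (bottom)} and column c.
   The integers 1..n are represented by 'I_n (i stands for i+1); this shift
   preserves the order. *)
Definition cell (b : nat) := ('I_2 * 'I_b)%type.

Definition weakly_nw (b : nat) (u v : cell b) : bool :=
  (u.1 <= v.1) && (u.2 <= v.2).

(* S is an element of SYT^{+k}((b,b)) with n = 2b + k:
   a filling of the cells by nonempty sets forming a set partition of [n],
   with max S(u) < min S(v) whenever u <> v and u weakly northwest of v. *)
Definition is_SYTplus (n b : nat) (S : {ffun cell b -> {set 'I_n}}) : bool :=
  [&& [forall u, S u != set0],
      [forall u, forall v, (u != v) ==> [disjoint S u & S v]],
      (\bigcup_(u : cell b) S u == [set: 'I_n]) &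
      [forall u, forall v, ((u != v) && weakly_nw u v) ==>
         [forall x in S u, forall y in S v, (x < y)%N]]].

Definition top_row_entries (n b : nat) (S : {ffun cell b -> {set 'I_n}}) : nat :=
  \sum_(c < b) #|S (ord0, c)|.

Definition count_b (n b m : nat) : nat :=
  #|[set S : {ffun cell b -> {set 'I_n}} |
       is_SYTplus S && (top_row_entries S == m)]|.

(* Main.v *)
Require Import Defs.
From mathcomp Require Import all_boot.
From mathcomp Require Import zify.
Set Implicit Arguments. Unset Strict Implicit. Unset Printing Implicit Defensive.

Section Comb.
Variable b' : nat.
Local Notation b := b'.+1.

Definition rlen (p q : nat) (u : cell b) : nat := if u.1 == ord0 then p else q.
Definition patS n p q (S : {ffun cell b -> {set 'I_n}}) :=
  [forall u, (S u != set0) == (u.2 < rlen p q u)].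
Definition partS n (S : {ffun cell b -> {set 'I_n}}) :=
  [forall u, forall v, (u != v) ==> [disjoint S u & S v]]
  && (\bigcup_(u : cell b) S u == [set: 'I_n]).
Definition sortS n (S : {ffun cell b -> {set 'I_n}}) :=
  [forall u, forall v, ((u != v) && weakly_nw u v) ==>
     [forall x in S u, forall y in S v, (x < y)%N]].
Definition validS n p q (S : {ffun cell b -> {set 'I_n}}) :=
  [&& q <= p, p <= b, patS p q S, partS S & sortS S].
Definition Vs n p q m :=
  [set S : {ffun cell b -> {set 'I_n}} | validS p q S && (top_row_entries S == m)].

Lemma VsE n p q m S : (S \in Vs n p q m) =
  [&& q <= p, p <= b, patS p q S, partS S, sortS S & top_row_entries S == m].
Proof. by rewrite inE /validS -!andbA. Qed.

Section Basic.
Variable n : nat.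
Implicit Types S : {ffun cell b -> {set 'I_n}}.

Lemma patP p q S : reflect (forall u, (S u != set0) = (u.2 < rlen p q u)) (patS p q S).
Proof.
apply: (iffP forallP) => H u; first exact: (eqP (H u)).
by apply/eqP; apply: H.
Qed.

Lemma partP S : reflect
  ((forall u v x, u != v -> x \in S u -> x \in S v -> False) /\ (forall x, exists u, x \in S u))
  (partS S).
Proof.
apply: (iffP andP) => [[/forallP D /eqP C] | [D C]]; split.
- move=> u v x Huv Hu Hv; move: (D u) => /forallP /(_ v); rewrite Huv /= => Hd.
  by rewrite (disjointFr Hd Hu) in Hv.
- move=> x; have : x \in [set: 'I_n] by [].
  by rewrite -C => /bigcupP [u _ Hu]; exists u.
- apply/forallP => u; apply/forallP => v; apply/implyP => Huv.
  rewrite -setI_eq0; apply/eqP/setP => x; rewrite !inE; apply/negbTE/negP => /andP [Hu Hv].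
  exact: (D u v x Huv Hu Hv).
- apply/eqP/setP => x; rewrite inE; case: (C x) => u Hu; apply/bigcupP; by exists u.
Qed.

Lemma sortP S : reflect
  (forall u v x y, u != v -> weakly_nw u v -> x \in S u -> y \in S v -> (x < y)%N)
  (sortS S).
Proof.
apply: (iffP forallP) => H.
- move=> u v x y Huv Hnw Hx Hy.
  move: (H u) => /forallP /(_ v) /implyP; rewrite Huv Hnw => /(_ isT) /forallP /(_ x).
  by rewrite Hx => /forallP /(_ y); rewrite Hy.
- move=> u; apply/forallP => v; apply/implyP => /andP [Huv Hnw].
  apply/forallP => x; apply/implyP => Hx; apply/forallP => y; apply/implyP => Hy.
  exact: H Huv Hnw Hx Hy.
Qed.

End Basic.

Lemma max_top n (S : {ffun cell b -> {set 'I_n.+1}}) u v :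
  sortS S -> ord_max \in S u -> v != u -> weakly_nw u v -> S v = set0.
Proof.
move=> /sortP Hs Hm Hvu Hnw; apply/eqP; apply/negPn/negP => /set0Pn [y Hy].
have := Hs u v ord_max y; rewrite eq_sym Hvu Hnw Hm Hy => /(_ isT isT isT isT).
by rewrite ltnNge leq_ord.
Qed.

Section Step.
Variable n : nat.
Definition wd : 'I_n -> 'I_n.+1 := widen_ord (leqnSn n).

Lemma wd_inj : injective wd.
Proof. by move=> x y H; apply: val_inj; exact: (congr1 val H). Qed.

Lemma wd_max x : wd x != ord_max.
Proof. by rewrite -val_eqE /= neq_ltn ltn_ord. Qed.

Lemma I_cases (y : 'I_n.+1) : y = ord_max \/ exists x, y = wd x.
Proof.
case: (ltnP y n) => H.
  by right; exists (Ordinal H); apply: val_inj.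
left; apply: val_inj => /=; have := ltn_ord y; lia.
Qed.

Definition res (S : {ffun cell b -> {set 'I_n.+1}}) : {ffun cell b -> {set 'I_n}} :=
  [ffun u => [set x | wd x \in S u]].
Definition ext (u0 : cell b) (S : {ffun cell b -> {set 'I_n}}) : {ffun cell b -> {set 'I_n.+1}} :=
  [ffun u => (wd @: S u) :|: (if u == u0 then [set ord_max] else set0)].

Lemma mem_res S u x : (x \in res S u) = (wd x \in S u).
Proof. by rewrite ffunE inE. Qed.

Lemma mem_ext_wd u0 S u x : (wd x \in ext u0 S u) = (x \in S u).
Proof.
rewrite ffunE inE mem_imset; last exact: wd_inj.
by case: (u == u0); rewrite ?inE ?(negbTE (wd_max x)) orbF.
Qed.

Lemma max_notin_img (A : {set 'I_n}) : ord_max \notin wd @: A.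
Proof. by apply/imsetP => -[x _ /eqP]; rewrite eq_sym (negbTE (wd_max x)). Qed.

Lemma mem_ext_max u0 S u : (ord_max \in ext u0 S u) = (u == u0).
Proof.
rewrite ffunE inE (negbTE (max_notin_img _)) /=.
by case: (u == u0); rewrite ?inE ?eqxx.
Qed.

Lemma res_ext u0 : cancel (ext u0) res.
Proof. by move=> S; apply/ffunP => u; apply/setP => x; rewrite mem_res mem_ext_wd. Qed.

Lemma ext_inj u0 : injective (ext u0).
Proof. exact: can_inj (res_ext u0). Qed.

Lemma ext_res u0 S : partS S -> ord_max \in S u0 -> ext u0 (res S) = S.
Proof.
move=> /partP [D _] Hm; apply/ffunP => u; apply/setP => y.
case: (I_cases y) => [->|[x ->]]; last by rewrite mem_ext_wd mem_res.
rewrite mem_ext_max; case: eqP => [->|/eqP Hu] //.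
by apply/esym/negbTE/negP => Hy; apply: (D u u0 ord_max Hu Hy Hm).
Qed.

Lemma card_ext u0 S u : #|ext u0 S u| = #|S u| + (u == u0).
Proof.
rewrite ffunE; case: (u == u0).
  by rewrite setUC cardsU1 max_notin_img card_imset ?addn1 //; exact: wd_inj.
by rewrite setU0 card_imset ?addn0 //; exact: wd_inj.
Qed.

Lemma top_ext u0 S : top_row_entries (ext u0 S) = top_row_entries S + (u0.1 == ord0).
Proof.
rewrite /top_row_entries.
rewrite (eq_bigr (fun c : 'I_b => #|S (ord0, c)| + ((ord0, c) == u0))); last first.
  by move=> c _; rewrite card_ext.
rewrite big_split /=; congr (_ + _).
case: u0 => r0 c0 /=.
rewrite (bigD1 c0) //= big1 ?addn0.
  by rewrite xpair_eqE eqxx andbT eq_sym.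
by move=> c Hc; rewrite xpair_eqE (negbTE Hc) andbF.
Qed.

Lemma ext_nonempty u0 S u : (ext u0 S u != set0) = (S u != set0) || (u == u0).
Proof.
case: (u =P u0) => [->|Hu]; rewrite ?orbT ?orbF.
  by apply/set0Pn; exists ord_max; rewrite mem_ext_max.
by rewrite ffunE (introF eqP Hu) setU0 imset_eq0.
Qed.

Lemma ext_single u0 S : (ext u0 S u0 == [set ord_max]) = (S u0 == set0).
Proof.
apply/eqP/eqP => E.
  apply/setP => x; rewrite in_set0; apply/negbTE/negP => Hx.
  have : wd x \in [set ord_max] by rewrite -E mem_ext_wd.
  by rewrite inE (negbTE (wd_max x)).
by rewrite ffunE eqxx E imset0 set0U.
Qed.

Lemma partS_ext u0 S : partS (ext u0 S) = partS S.
Proof.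
apply/partP/partP => -[D C]; split.
- move=> u v x Huv Hu Hv; apply: (D u v (wd x) Huv); by rewrite mem_ext_wd.
- move=> x; case: (C (wd x)) => u Hu; exists u; by rewrite -(mem_ext_wd u0).
- move=> u v y Huv; case: (I_cases y) => [->|[x ->]].
    by rewrite !mem_ext_max => /eqP Eu /eqP Ev; rewrite Eu Ev eqxx in Huv.
  rewrite !mem_ext_wd; exact: D.
- move=> y; case: (I_cases y) => [->|[x ->]].
    by exists u0; rewrite mem_ext_max.
  case: (C x) => u Hu; exists u; by rewrite mem_ext_wd.
Qed.

Lemma sortS_ext_l u0 S : sortS (ext u0 S) -> sortS S.
Proof.
move=> /sortP H; apply/sortP => u v x y Huv Hnw Hx Hy.
have := H u v (wd x) (wd y) Huv Hnw; rewrite !mem_ext_wd => /(_ Hx Hy).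
by [].
Qed.

Lemma sortS_ext_r u0 S : sortS S ->
  (forall v, v != u0 -> weakly_nw u0 v -> S v = set0) -> sortS (ext u0 S).
Proof.
move=> /sortP H Hc; apply/sortP => u v x y Huv Hnw.
case: (I_cases x) => [->|[x' ->]].
  rewrite mem_ext_max => /eqP Eu; subst u.
  case: (I_cases y) => [->|[y' ->]].
    by rewrite mem_ext_max => /eqP E; rewrite E eqxx in Huv.
  by rewrite mem_ext_wd (Hc v) ?inE // eq_sym.
case: (I_cases y) => [->|[y' ->]].
  by move=> _ _; rewrite /= ltn_ord.
rewrite !mem_ext_wd => Hx Hy; exact: H Huv Hnw Hx Hy.
Qed.

End Step.

Lemma I2 (r : 'I_2) : r = ord0 \/ r = ord_max.
Proof. by case: r => [[|[|r]] Hr] //; [left|right]; apply: val_inj. Qed.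

Definition uT p : cell b := (ord0, inord p.-1).
Definition uB q : cell b := (ord_max, inord q.-1).

Lemma rlen0 p q c : rlen p q (ord0, c) = p. Proof. by []. Qed.
Lemma rlen1 p q c : rlen p q (ord_max, c) = q. Proof. by []. Qed.

Lemma eq_inord c p : p <= b -> (c == inord p.-1 :> 'I_b) = (c == p.-1 :> nat).
Proof. by move=> H; rewrite -val_eqE /= inordK //; lia. Qed.

Lemma uT_uB p q : (uT p == uB q) = false.
Proof. by rewrite /uT /uB xpair_eqE. Qed.

Lemma RL1 p q (u : cell b) : 0 < p -> p <= b ->
  (u.2 < rlen p q u) = (u.2 < rlen p.-1 q u) || (u == uT p).
Proof.
move=> Hp Hpb; case: u => r c; case: (I2 r) => -> /=.
  rewrite !rlen0 /uT xpair_eqE eqxx /= eq_inord //.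
  apply/idP/orP => [H|[/= H|/eqP H]]; first by case: (ltnP c p.-1) => H'; [left|right; apply/eqP]; lia.
    lia. lia.
by rewrite !rlen1 /uT xpair_eqE /= orbF.
Qed.

Lemma RL2 p q (u : cell b) : 0 < q -> q <= b ->
  (u.2 < rlen p q u) = (u.2 < rlen p q.-1 u) || (u == uB q).
Proof.
move=> Hq Hqb; case: u => r c; case: (I2 r) => -> /=.
  by rewrite !rlen0 /uB xpair_eqE /= orbF.
rewrite !rlen1 /uB xpair_eqE eqxx /= eq_inord //.
apply/idP/orP => [H|[/= H|/eqP H]]; first by case: (ltnP c q.-1) => H'; [left|right; apply/eqP]; lia.
  lia. lia.
Qed.

Lemma uT_in p q : 0 < p -> p <= b -> (uT p).2 < rlen p q (uT p).
Proof. by move=> Hp Hpb; rewrite rlen0 /= inordK; lia. Qed.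

Lemma uB_in p q : 0 < q -> q <= b -> (uB q).2 < rlen p q (uB q).
Proof. by move=> Hq Hqb; rewrite rlen1 /= inordK; lia. Qed.

Lemma cornerT p p' q (v : cell b) : 0 < p -> p' <= p -> q <= p.-1 -> p <= b ->
  v != uT p -> weakly_nw (uT p) v -> ~~ (v.2 < rlen p' q v).
Proof.
move=> Hp Hp' Hq Hpb; case: v => r c; case: (I2 r) => ->; rewrite /uT /weakly_nw.
- rewrite xpair_eqE eqxx /= eq_inord // rlen0 inordK; last lia.
  move=> Hne Hle; rewrite -leqNgt; lia.
- rewrite rlen1 /= inordK; last lia.
  move=> _ Hle; rewrite -leqNgt; lia.
Qed.

Lemma cornerB p q q' (v : cell b) : 0 < q -> q' <= q -> q <= b ->
  v != uB q -> weakly_nw (uB q) v -> ~~ (v.2 < rlen p q' v).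
Proof.
move=> Hq Hq' Hqb; case: v => r c; case: (I2 r) => ->; rewrite /uB /weakly_nw.
- by [].
- rewrite xpair_eqE eqxx /= eq_inord // rlen1 inordK; last lia.
  move=> Hne Hle; rewrite -leqNgt; lia.
Qed.

Lemma corner_empty n p q (S : {ffun cell b -> {set 'I_n}}) u0 : patS p q S ->
  (forall v, v != u0 -> weakly_nw u0 v -> ~~ (v.2 < rlen p q v)) ->
  forall v, v != u0 -> weakly_nw u0 v -> S v = set0.
Proof.
move=> /patP P C v H1 H2; apply/eqP; apply/negPn; rewrite P; exact: C.
Qed.

Lemma top_ge n (S : {ffun cell b -> {set 'I_n}}) c : #|S (ord0, c)| <= top_row_entries S.
Proof. by rewrite /top_row_entries (bigD1 c) //= leq_addr. Qed.

Lemma AT_cond n p q m (S : {ffun cell b -> {set 'I_n.+1}}) :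
  S \in Vs n.+1 p q m -> ord_max \in S (uT p) -> [&& 0 < p, q < p & 0 < m].
Proof.
rewrite VsE => /and5P [Hqp Hpb /patP P /partP [D C] /andP [Hs /eqP Ht]] Hm.
have Hne : S (uT p) != set0 by apply/set0Pn; exists ord_max.
have Hp : 0 < p.
  move: Hne; rewrite P rlen0 /= inordK; lia.
have Hq : q < p.
  rewrite ltn_neqAle Hqp andbT; apply/negP => /eqP Eq; subst q.
  have E := max_top Hs Hm (v := uB p); rewrite eq_sym uT_uB /weakly_nw /= leqnn in E.
  have := P (uB p); rewrite E // eqxx rlen1 /= inordK; lia.
rewrite Hp Hq /= -Ht; apply: leq_trans (top_ge _ (inord p.-1)).
by rewrite card_gt0.
Qed.

Lemma AB_cond n p q m (S : {ffun cell b -> {set 'I_n.+1}}) :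
  S \in Vs n.+1 p q m -> ord_max \notin S (uT p) -> 0 < q /\ ord_max \in S (uB q).
Proof.
rewrite VsE => /and5P [Hqp Hpb /patP P /partP [D C] /andP [Hs /eqP Ht]] Hm.
case: (C ord_max) => -[r c] Hu.
have Hne : S (r, c) != set0 by apply/set0Pn; exists ord_max.
case: (I2 r) Hu Hne => -> Hu Hne.
  exfalso; move: (Hne); rewrite P rlen0 /= => Hc.
  have Hc' : c != p.-1 :> nat.
    apply/negP => /eqP Ec; move: Hm; rewrite /uT.
    by rewrite (_ : inord p.-1 = c) ?Hu //; apply: val_inj; rewrite /= inordK; lia.
  have H1 : uT p != (ord0, c) by rewrite /uT xpair_eqE eqxx /= eq_sym eq_inord.
  have H2 : weakly_nw (ord0, c) (uT p) by rewrite /weakly_nw /= inordK; lia.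
  have := P (uT p); rewrite (max_top Hs Hu H1 H2) eqxx rlen0 /= inordK; lia.
move: (Hne); rewrite P rlen1 /= => Hc.
split; first lia.
case: (c =P (inord q.-1)) => [Ec|Hc']; first by rewrite /uB -Ec.
exfalso.
have Hqb : q <= b by lia.
have Hc2 : c != q.-1 :> nat by rewrite -eq_inord //; exact/eqP.
have H1 : uB q != (ord_max, c) by rewrite /uB xpair_eqE eqxx /= eq_sym eq_inord.
have H2 : weakly_nw (ord_max, c) (uB q) by rewrite /weakly_nw /= inordK; lia.
have := P (uB q); rewrite (max_top Hs Hu H1 H2) eqxx rlen1 /= inordK; lia.
Qed.

Lemma memsep (T : finType) (A : {set T}) (P : pred T) x :
  (x \in [set y in A | P y]) = (x \in A) && P x.
Proof. by rewrite inE. Qed.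

Lemma card_bij n u0 (A : {set {ffun cell b -> {set 'I_n.+1}}})
    (B : {set {ffun cell b -> {set 'I_n}}}) :
  (forall S, (ext u0 S \in A) = (S \in B)) ->
  (forall S, S \in A -> ext u0 (res S) = S) -> #|A| = #|B|.
Proof.
move=> H1 H2.
have -> : A = ext u0 @: B.
  apply/setP => S; apply/idP/imsetP => [HS|[S0 HS0 ->]]; last by rewrite H1.
  by exists (res S); [rewrite -H1 (H2 S HS) | rewrite H2].
by rewrite card_imset //; exact: ext_inj.
Qed.

Lemma pat_new_gen n u0 (S0 : {ffun cell b -> {set 'I_n}}) (P P' : pred (cell b)) :
  (forall u, P' u = P u || (u == u0)) -> P u0 = false ->
  [forall u, (ext u0 S0 u != set0) == P' u] && (S0 u0 == set0) =
  [forall u, (S0 u != set0) == P u].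
Proof.
move=> HP HP0; apply/andP/forallP => [[/forallP H E] u | H].
  have := H u; rewrite ext_nonempty HP.
  case: (u =P u0) => [->|_]; last by rewrite !orbF.
  by move=> _; rewrite (eqP E) HP0 eqxx.
split.
  apply/forallP => u; rewrite ext_nonempty HP (eqP (H u)) //.
by have := H u0; rewrite HP0 => /eqP /negbFE.
Qed.

Lemma pat_cont_gen n u0 (S0 : {ffun cell b -> {set 'I_n}}) (P : pred (cell b)) :
  P u0 = true ->
  [forall u, (ext u0 S0 u != set0) == P u] && (S0 u0 != set0) =
  [forall u, (S0 u != set0) == P u].
Proof.
move=> HP0; apply/andP/forallP => [[/forallP H E] u | H].
  have := H u; rewrite ext_nonempty.
  case: (u =P u0) => [->|_]; last by rewrite !orbF.
  by rewrite E HP0.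
split.
  apply/forallP => u; rewrite ext_nonempty.
  case: (u =P u0) => [->|_]; last by rewrite orbF; exact: H.
  by rewrite orbT HP0.
by have := H u0; rewrite HP0 => /eqP.
Qed.

Lemma inV_part n p q m (S : {ffun cell b -> {set 'I_n}}) : S \in Vs n p q m -> partS S.
Proof. by rewrite VsE => /and5P [_ _ _ ? _]. Qed.

Lemma uT1 p : ((uT p).1 == ord0) = true. Proof. by []. Qed.
Lemma uB1 q : ((uB q).1 == ord0) = false. Proof. by []. Qed.

Lemma top_plus1 t m : 0 < m -> (t + 1 == m) = (t == m.-1).
Proof. by move=> Hm; rewrite -[in LHS](prednK Hm) addn1 eqSS. Qed.

Lemma case1 n p q m : 0 < p -> q < p -> 0 < m -> p <= b ->
  #|[set S in Vs n.+1 p q m | (ord_max \in S (uT p)) && (S (uT p) == [set ord_max])]|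
  = #|Vs n p.-1 q m.-1|.
Proof.
move=> Hp Hq Hm Hpb; apply: (card_bij (u0 := uT p)); last first.
  by move=> S; rewrite memsep => /andP [HV /andP [HM _]]; apply: ext_res => //; exact: inV_part HV.
move=> S0; rewrite memsep !VsE mem_ext_max eqxx ext_single partS_ext top_ext uT1 top_plus1 //.
have H1 : q <= p.-1 by lia.
have H2 : p.-1 <= b by lia.
rewrite (ltnW Hq) Hpb H1 H2 !andTb.
have PE := @pat_new_gen _ (uT p) S0 (fun u => u.2 < rlen p.-1 q u) (fun u => u.2 < rlen p q u).
rewrite /= in PE; have {}PE := PE (fun u => RL1 q u Hp Hpb).
have {}PE : [forall u, (ext (uT p) S0 u != set0) == (u.2 < rlen p q u)] &&
    (S0 (uT p) == set0) = patS p.-1 q S0.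
  by apply: PE; rewrite rlen0 /= inordK ?ltnn //; lia.
rewrite -PE -/(patS p q _).
apply/idP/idP.
  move=> /andP [/and4P [HP HQ HS HT] HE].
  by rewrite HP HE HQ HT (sortS_ext_l HS).
move=> /and4P [/andP [HP HE] HQ HS HT]; rewrite HP HQ HT HE /= !andbT.
apply: sortS_ext_r => //.
apply: (corner_empty (p := p.-1) (q := q)).
  by rewrite -PE; apply/andP; split; [exact: HP | exact: HE].
move=> v; apply: cornerT => //; lia.
Qed.

Lemma case2 n p q m : 0 < p -> q < p -> 0 < m -> p <= b ->
  #|[set S in Vs n.+1 p q m | (ord_max \in S (uT p)) && (S (uT p) != [set ord_max])]|
  = #|Vs n p q m.-1|.
Proof.
move=> Hp Hq Hm Hpb; apply: (card_bij (u0 := uT p)); last first.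
  by move=> S; rewrite memsep => /andP [HV /andP [HM _]]; apply: ext_res => //; exact: inV_part HV.
move=> S0; rewrite memsep !VsE mem_ext_max eqxx ext_single partS_ext top_ext uT1 top_plus1 //.
rewrite (ltnW Hq) Hpb !andTb.
have PE := @pat_cont_gen _ (uT p) S0 (fun u => u.2 < rlen p q u).
rewrite /= in PE; have {}PE := PE (uT_in q Hp Hpb).
rewrite -[patS p q S0]PE -/(patS p q _).
apply/idP/idP.
  move=> /andP [/and4P [HP HQ HS HT] HE].
  by rewrite HP HE HQ HT (sortS_ext_l HS).
move=> /and4P [/andP [HP HE] HQ HS HT]; rewrite HP HQ HT HE /= !andbT.
apply: sortS_ext_r => //.
apply: (corner_empty (p := p) (q := q)).
  by rewrite /patS -PE; apply/andP; split; [exact: HP | exact: HE].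
move=> v; apply: cornerT => //; lia.
Qed.

Lemma case3 n p q m : 0 < q -> q <= p -> p <= b ->
  #|[set S in Vs n.+1 p q m | (ord_max \notin S (uT p)) && (S (uB q) == [set ord_max])]|
  = #|Vs n p q.-1 m|.
Proof.
move=> Hq Hqp Hpb; have Hqb : q <= b by lia.
apply: (card_bij (u0 := uB q)); last first.
  move=> S; rewrite memsep => /andP [HV /andP [_ /eqP HM]]; apply: ext_res; first exact: inV_part HV.
  by rewrite HM inE.
move=> S0; rewrite memsep !VsE mem_ext_max uT_uB (_ : ~~ false = true) // ext_single partS_ext top_ext uB1 addn0.
have H1 : q.-1 <= p by lia.
rewrite Hqp Hpb H1 !andTb.
have PE := @pat_new_gen _ (uB q) S0 (fun u => u.2 < rlen p q.-1 u) (fun u => u.2 < rlen p q u).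
rewrite /= in PE; have {}PE := PE (fun u => RL2 p u Hq Hqb).
have {}PE : [forall u, (ext (uB q) S0 u != set0) == (u.2 < rlen p q u)] &&
    (S0 (uB q) == set0) = patS p q.-1 S0.
  by apply: PE; rewrite rlen1 /= inordK ?ltnn //; lia.
rewrite -PE -/(patS p q _).
apply/idP/idP.
  move=> /andP [/and4P [HP HQ HS HT] HE].
  by rewrite HP HE HQ HT (sortS_ext_l HS).
move=> /and4P [/andP [HP HE] HQ HS HT]; rewrite HP HQ HT HE /= !andbT.
apply: sortS_ext_r => //.
apply: (corner_empty (p := p) (q := q.-1)).
  by rewrite -PE; apply/andP; split; [exact: HP | exact: HE].
move=> v; apply: cornerB => //; lia.
Qed.

Lemma case4 n p q m : 0 < q -> q <= p -> p <= b ->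
  #|[set S in Vs n.+1 p q m | (ord_max \notin S (uT p)) && (S (uB q) != [set ord_max])]|
  = #|Vs n p q m|.
Proof.
move=> Hq Hqp Hpb; have Hqb : q <= b by lia.
apply: (card_bij (u0 := uB q)); last first.
  move=> S; rewrite memsep => /andP [HV /andP [HM _]]; apply: ext_res; first exact: inV_part HV.
  by case: (AB_cond HV HM).
move=> S0; rewrite memsep !VsE mem_ext_max uT_uB (_ : ~~ false = true) // ext_single partS_ext top_ext uB1 addn0.
rewrite Hqp Hpb !andTb.
have PE := @pat_cont_gen _ (uB q) S0 (fun u => u.2 < rlen p q u).
rewrite /= in PE; have {}PE := PE (uB_in p Hq Hqb).
rewrite -[patS p q S0]PE -/(patS p q _).
apply/idP/idP.
  move=> /andP [/and4P [HP HQ HS HT] HE].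
  by rewrite HP HE HQ HT (sortS_ext_l HS).
move=> /and4P [/andP [HP HE] HQ HS HT]; rewrite HP HQ HT HE /= !andbT.
apply: sortS_ext_r => //.
apply: (corner_empty (p := p) (q := q)).
  by rewrite /patS -PE; apply/andP; split; [exact: HP | exact: HE].
move=> v; apply: cornerB => //; lia.
Qed.

Lemma cardsplit (T : finType) (A : {set T}) (P : pred T) :
  #|A| = #|[set x in A | P x]| + #|[set x in A | ~~ P x]|.
Proof.
rewrite -(cardsID [set x | P x] A); congr (_ + _); apply: eq_card => x; rewrite !inE; by case: (x \in A); case: (P x).
Qed.

Lemma cardsplit2 (T : finType) (A : {set T}) (P Q : pred T) :
  #|[set x in A | P x]| = #|[set x in A | P x && Q x]| + #|[set x in A | P x && ~~ Q x]|.
Proof.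
rewrite (cardsplit _ Q); congr (_ + _); apply: eq_card => x; by rewrite !inE andbA.
Qed.

Lemma card0_of (T : finType) (A : {set T}) : (forall x, x \in A -> False) -> #|A| = 0.
Proof.
move=> H; apply/eqP; rewrite cards_eq0; apply/eqP/setP => x; rewrite in_set0.
by apply/negbTE/negP; exact: H.
Qed.

Lemma Vs_rec n p q m : q <= p -> p <= b ->
  #|Vs n.+1 p q m| =
    (if [&& 0 < p, q < p & 0 < m] then #|Vs n p.-1 q m.-1| + #|Vs n p q m.-1| else 0)
    + (if 0 < q then #|Vs n p q.-1 m| + #|Vs n p q m| else 0).
Proof.
move=> Hqp Hpb.
rewrite (cardsplit _ (fun S : {ffun cell b -> {set 'I_n.+1}} => ord_max \in S (uT p))).
rewrite (cardsplit2 _ _ (fun S : {ffun cell b -> {set 'I_n.+1}} => S (uT p) == [set ord_max])).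
rewrite (cardsplit2 _ (fun S : {ffun cell b -> {set 'I_n.+1}} => ord_max \notin S (uT p)) (fun S : {ffun cell b -> {set 'I_n.+1}} => S (uB q) == [set ord_max])).
congr (_ + _).
  case: ifP => [/and3P [Hp Hq Hm] | Hc].
    by rewrite case1 // case2.
  rewrite !card0_of // => S; rewrite memsep => /andP [HV /andP [HM _]];
    by rewrite (AT_cond HV HM) in Hc.
case: ifP => Hq.
  by rewrite case3 // case4.
rewrite !card0_of // => S; rewrite memsep => /andP [HV /andP [HM _]];
  by case: (AB_cond HV HM) => Hq' _; rewrite Hq' in Hq.
Qed.

Lemma Vs0 p q m : #|Vs 0 p q m| = ((p == 0) && (q == 0) && (m == 0)).
Proof.
set S0 : {ffun cell b -> {set 'I_0}} := [ffun => set0].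
have all0 : forall S : {ffun cell b -> {set 'I_0}}, S = S0.
  by move=> S; apply/ffunP => u; apply/setP => -[x Hx].
have top0 : top_row_entries S0 = 0.
  by rewrite /top_row_entries big1 // => c _; rewrite ffunE cards0.
case E: ((p == 0) && (q == 0) && (m == 0)).
  move/andP: E => [/andP [/eqP -> /eqP ->] /eqP ->].
  rewrite (_ : Vs 0 0 0 0 = [set S0]) ?cards1 //.
  apply/setP => S; rewrite in_set1 (all0 S) eqxx VsE top0 eqxx leqnn /= andbT.
  apply/and3P; split.
  - by apply/patP => u; rewrite ffunE eqxx /rlen if_same.
  - by apply/partP; split => [u v x _|x]; [rewrite ffunE inE | case: x].
  - by apply/sortP => u v x y _ _; rewrite ffunE inE.
rewrite card0_of // => S; rewrite VsE (all0 S) => /and5P [_ _ /patP P _ /andP [_ /eqP Hm]].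
move: E; rewrite -Hm top0 eqxx andbT.
have := P (ord0, ord0); have := P (ord_max, ord0).
rewrite !ffunE eqxx rlen0 rlen1 /=.
clear P; by case: p => [|p]; case: q => [|q].
Qed.

End Comb.

From mathcomp Require Import all_algebra ring.
Import GRing.Theory Num.Theory.

Fixpoint gf (n p q m : nat) : nat :=
  match n with
  | 0 => ((p == 0) && (q == 0) && (m == 0) : nat)
  | n'.+1 =>
    if q <= p then
      (if [&& 0 < p, q < p & 0 < m] then gf n' p.-1 q m.-1 + gf n' p q m.-1 else 0)
      + (if 0 < q then gf n' p q.-1 m + gf n' p q m else 0)
    else 0
  end.

Lemma gfS n p q m : gf n.+1 p q m =
    if q <= p then
      (if [&& 0 < p, q < p & 0 < m] then gf n p.-1 q m.-1 + gf n p q m.-1 else 0)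
      + (if 0 < q then gf n p q.-1 m + gf n p q m else 0)
    else 0.
Proof. by []. Qed.

Lemma gf_big n p q m : gf n p q m != 0 -> p + q <= n.
Proof.
elim: n p q m => [|n IH] p q m.
  by case: p => //; case: q.
have IH' : forall p' q' m', p' + q' > n -> gf n p' q' m' = 0.
  move=> p' q' m' Hl; apply/eqP; apply: contraTT Hl => /IH; lia.
rewrite gfS; case: ifP => // Hqp.
case: ifP => [/and3P [Hp Hqp' Hm] | _]; case: ifP => Hq //; apply: contraR; rewrite -ltnNge => Hl;
  rewrite ?IH' //; lia.
Qed.

Lemma gf0 n p q m : n < p + q -> gf n p q m = 0.
Proof. by move=> H; apply/eqP; apply: contraTT H => /gf_big; rewrite -leqNgt. Qed.

Lemma gf_m0 n p q : gf n.+1 p q 0 = 0.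
Proof.
elim: n p q => [|n IH] p q; rewrite gfS; (case: ifP => // Hqp0;
  case: ifP => [/and3P [] // | _]; rewrite add0n).
  case: ifP => // Hq.
  by case: q Hqp0 Hq => [|q] //; case: p => //.
by case: ifP => // Hq; rewrite !IH.
Qed.

Lemma gf_00 n m : gf n.+1 0 0 m = 0.
Proof. by rewrite gfS. Qed.

Lemma gf_q0 n d m : gf n.+1 d 0 m =
   if (0 < d) && (0 < m) then gf n d.-1 0 m.-1 + gf n d 0 m.-1 else 0.
Proof. rewrite gfS ltnn addn0; by case: d. Qed.

Definition H (n m d : nat) := \sum_(q < n) gf n (q.+1 + d) q.+1 m.

Lemma H_rec n m d :
  H n.+1 m d = (if (0 < d) && (0 < m) then H n m.-1 d.-1 + H n m.-1 d else 0)
               + gf n d.+1 0 m + H n m d.+1 + H n m d.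
Proof.
rewrite /H.
have E : forall q : 'I_n.+1, gf n.+1 (q.+1 + d) q.+1 m =
   (if (0 < d) && (0 < m) then gf n (q.+1 + d.-1) q.+1 m.-1 + gf n (q.+1 + d) q.+1 m.-1 else 0)
   + (gf n (q.+1 + d) q m + gf n (q.+1 + d) q.+1 m).
  move=> q; rewrite gfS leq_addr /= -[X in X < _]addn0 ltn_add2l.
  by case: d => [|d] //=; rewrite addnS /=.
rewrite (eq_bigr _ (fun q _ => E q)) big_split /= big_split /=.
rewrite [X in X + _]big_ord_recr /=.
rewrite [\sum_(i < n.+1) gf n _ i _]big_ord_recl /= [\sum_(i < n.+1) gf n _ i.+1 _]big_ord_recr /=.
have Z : forall p m', gf n p n.+1 m' = 0 by move=> *; apply: gf0; lia.
rewrite !Z (_ : (if _ then 0 + 0 else 0) = 0); last by case: ifP.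
rewrite addn0.
have -> : \sum_(i < n) (if (0 < d) && (0 < m) then gf n (i.+1 + d.-1) i.+1 m.-1 + gf n (i.+1 + d) i.+1 m.-1 else 0)
   = (if (0 < d) && (0 < m) then \sum_(q < n) gf n (q.+1 + d.-1) q.+1 m.-1 + \sum_(q < n) gf n (q.+1 + d) q.+1 m.-1 else 0).
  case: ifP => _; first by rewrite big_split.
  by rewrite big1.
have -> : \sum_(i < n) gf n ((bump 0 i).+1 + d) (bump 0 i) m = \sum_(q < n) gf n (q.+1 + d.+1) q.+1 m.
  by apply: eq_bigr => i _; rewrite /bump /= add1n addSnnS.
rewrite /= add1n; ring.
Qed.

Definition R (n m d : nat) := H n m d + H n m d.+1 + gf n d.+1 0 m.

Lemma H_m0 n d : H n.+1 0 d = 0.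
Proof. by rewrite /H big1 // => i _; rewrite gf_m0. Qed.

Lemma R_m0 n d : R n.+1 0 d = 0.
Proof. by rewrite /R !H_m0 gf_m0. Qed.

Lemma R_rec n m d :
  R n.+2 m d = (if 0 < m then (if 0 < d then R n.+1 m.-1 d.-1 else 0) + R n.+1 m.-1 d else 0)
               + R n.+1 m d.+1 + R n.+1 m d.
Proof.
rewrite /R !H_rec !gf_q0.
case: m => [|m] /=; case: d => [|d] /=; rewrite ?gf_00; ring.
Qed.

Local Open Scope ring_scope.

Definition Cz (a : nat) (i : int) : int :=
  match i with Posz k => ('C(a, k))%:Z | Negz _ => 0 end.

Lemma Cz_neg a (i : int) : i < 0 -> Cz a i = 0.
Proof. by case: i. Qed.

Lemma CzS a (i : int) : Cz a.+1 i = Cz a i + Cz a (i - 1).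
Proof.
case: i => [[|k]|k] /=.
- by rewrite !bin0.
- rewrite binS PoszD; congr (_ + _).
  by rewrite subSS subn0.
- by rewrite addr0.
Qed.

Definition Q (a : nat) (k j : int) : int := Cz a k * Cz a j - Cz a (k + 1) * Cz a (j - 1).

Lemma Q_rec a k j : Q a.+1 k j = Q a k j + Q a (k - 1) j + Q a k (j - 1) + Q a (k - 1) (j - 1).
Proof.
rewrite /Q !CzS !addrK.
set x := Cz a (j - 1 - 1). ring.
Qed.

Lemma Q_diag a (k : int) : Q a k (k + 1) = 0.
Proof. by rewrite /Q addrK mulrC subrr. Qed.

Lemma R_recZ n m d :
  (R n.+2 m.+1 d)%:Z = (if (0 < d)%N then (R n.+1 m d.-1)%:Z else 0) + (R n.+1 m d)%:Z
               + (R n.+1 m.+1 d.+1)%:Z + (R n.+1 m.+1 d)%:Z.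
Proof.
rewrite R_rec ltn0Sn succnK; case: ifP => _; by rewrite -!PoszD.
Qed.

Lemma RQ n m d : (R n.+1 m.+1 d)%:Z = Q n m (m%:Z - d%:Z).
Proof.
elim: n m d => [|n IH] m d.
  rewrite /R /H !big_ord1 !gfS /= /Q.
  case: m => [|m]; case: d => [|d] //=.
  by rewrite !bin0n addn1 /= !mul0r subrr.
rewrite R_recZ !IH Q_rec.
case: m => [|m].
  rewrite R_m0.
  have Qn1 : forall j : int, j <= 0 -> Q n (0 - 1) j = 0.
    move=> j Hj; rewrite /Q (@Cz_neg _ (0 - 1)); last by lia.
    by rewrite (@Cz_neg _ (j - 1)) ?mul0r ?mulr0 ?subrr //; lia.
  rewrite (Qn1 (0%:Z - d%:Z)); last by lia.
  rewrite (Qn1 (0%:Z - d%:Z - 1)); last by lia.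
  rewrite !R_m0 if_same !add0r !addr0 addrC; congr (_ + _); congr (Q _ _ _); lia.
have E1 : m.+1%:Z - 1 = m%:Z by lia.
rewrite E1.
case: d => [|d].
  rewrite (_ : m.+1%:Z - 0%:Z = m%:Z + 1); last by lia.
  rewrite Q_diag add0r !IH.
  rewrite (_ : m.+1%:Z - 1%:Z = m%:Z); last by lia.
  rewrite (_ : m%:Z + 1 - 1 = m%:Z); last by lia.
  rewrite (_ : m%:Z - 0%:Z = m%:Z); last by lia.
  ring.
rewrite !IH /=.
rewrite (_ : m.+1%:Z - d.+2%:Z = m%:Z - d.+1%:Z); last by lia.
rewrite (_ : m.+1%:Z - d.+1%:Z - 1 = m%:Z - d.+1%:Z); last by lia.
rewrite (_ : m.+1%:Z - d.+1%:Z = m%:Z - d%:Z); last by lia.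
ring.
Qed.

Local Close Scope ring_scope.

Lemma T_H n m : \sum_(1 <= b < (n./2).+1) gf n b b m = H n m 0.
Proof.
have Hh : n./2 <= n by rewrite leq_half_double; lia.
transitivity (\sum_(1 <= b < n.+1) gf n b b m).
  rewrite [RHS](@big_cat_nat _ _ _ (n./2).+1) //=.
  rewrite [X in _ = _ + X]big_nat_cond [X in _ = _ + X]big1 ?addn0 // => i /andP [/andP [Hi _] _].
  apply: gf0; move: Hi; rewrite ltn_half_double; lia.
rewrite big_add1 /= big_mkord /H; apply: eq_bigr => i _; by rewrite addn0.
Qed.

Lemma final_arith a (k : nat) : (Q a k k * (k.+1)%:Z)%R = Posz ('C(a.+1, k) * 'C(a, k)).
Proof.
rewrite /Q.
case: k => [|k].
  by rewrite /= !bin0 mulr1 mulr0 subr0 mulr1.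
rewrite (_ : (k.+1%:Z + 1 = k.+2%:Z)%R); last by lia.
rewrite (_ : (k.+1%:Z - 1 = k%:Z)%R); last by lia.
rewrite /= binS.
have h1 := mul_bin_left a k.+1.
have h2 := mul_bin_left a k.
set c0 := 'C(a, k) in h2 *; set c1 := 'C(a, k.+1) in h1 h2 *; set c2 := 'C(a, k.+2) in h1 *.
case: (leqP k.+1 a) => Hak.
  have E : a - k = (a - k.+1).+1 by lia.
  rewrite E in h2.
  set t := a - k.+1 in h1 h2 E.
  apply/eqP; rewrite -subr_eq0; apply/eqP.
  have H1 : (k.+2%:Z * c2%:Z = t%:Z * c1%:Z)%R by rewrite -!PoszM h1.
  have H2 : (k.+1%:Z * c1%:Z = t.+1%:Z * c0%:Z)%R by rewrite -!PoszM h2.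
  rewrite PoszM PoszD.
  nia.
have Ec1 : c1 = 0 by rewrite /c1 bin_small.
have Ec2 : c2 = 0 by rewrite /c2 bin_small //; lia.
rewrite Ec1 Ec2 /=.
by rewrite !mul0r muln0.
Qed.

Lemma arith_main n m : 2 <= n -> 1 <= m ->
  (\sum_(1 <= b < (n./2).+1) gf n b b m) * m = 'C(n.-1, m.-1) * 'C(n.-2, m.-1).
Proof.
case: n => [|[|n]] // _; case: m => [|m] // _.
rewrite T_H.
have -> : H n.+2 m.+1 0 = R n.+1 m.+1 0.
  by rewrite H_rec /R /=; ring.
apply/eqP; rewrite -eqz_nat PoszM RQ /= subr0.
by rewrite final_arith.
Qed.


Lemma Vs_gf b' n p q m : p <= b'.+1 -> #|Vs b' n p q m| = gf n p q m.
Proof.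
elim: n p q m => [|n IH] p q m Hpb; first by rewrite Vs0.
rewrite gfS; case: (leqP q p) => Hqp.
  rewrite Vs_rec // !IH //; lia.
apply: card0_of => S; rewrite VsE => /andP [Hqp' _].
by rewrite leqNgt Hqp in Hqp'.
Qed.

Lemma count_Vs n b' m : count_b n b'.+1 m = #|Vs b' n b'.+1 b'.+1 m|.
Proof.
rewrite /count_b; apply: eq_card => S; rewrite VsE inE leqnn /=.
have -> : patS b'.+1 b'.+1 S = [forall u, S u != set0].
  by apply: eq_forallb => u; rewrite /rlen if_same ltn_ord eqb_id.
by rewrite /is_SYTplus /partS /sortS -!andbA.
Qed.

Theorem corollary8 (n m : nat) :
  2 <= n -> 1 <= m ->
  (\sum_(1 <= b < (n./2).+1) count_b n b m) * m =
    'C(n.-1, m.-1) * 'C(n.-2, m.-1).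
Proof.
move=> Hn Hm.
have E : \sum_(1 <= b < (n./2).+1) count_b n b m = \sum_(1 <= b < (n./2).+1) gf n b b m.
  apply: eq_big_nat => i /andP [Hi _].
  by case: i Hi => [|i] // _; rewrite count_Vs Vs_gf.
by rewrite E; apply: arith_main.
Qed.
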